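(* Let $n\ge 2$, $\mathcal{O}\in\mathcal{C}_c^{(n)}$, $\nu\in(0,1]$, and $\mathcal{J}\in\mathbf{J}_{\mathcal{O}}^{\nu}$. Then there is a constant $\mu_{n,\nu}$ depending only on $n$ and $\nu$ such that $\|\mathcal{J}\|_2\le\mu_{n,\nu}$, $0\le\mu_{n,\nu}<1$.
   Context: $\imath=\sqrt{-1}$. For $1\le i<j\le n$ and real $\phi,\alpha$, $R(i,j,\phi,\alpha)$ is the $n\times n$ matrix equal to $I_n$ except for entries $(i,i)=(j,j)=\cos\phi$, $(i,j)=-e^{\imath\alpha}\sin\phi$, $(j,i)=e^{-\imath\alpha}\sin\phi$. Let $N=n(n-1)/2$. For $A=(a_{st})\in\mathbb{C}^{n\times n}$ let $c_t=(a_{1t},\dots,a_{t-1,t})^T$, $r_s=(a_{s1},\dots,a_{s,s-1})$ ($2\le s,t\le n$) and $\mathrm{ve}(A)=[c_2^T,\dots,c_n^T,r_2,\dots,r_n]^T\in\mathbb{C}^{2N}$. Let $\nu_{ij}$ be the linear map on $\mathbb{C}^{n\times n}$ setting entries $(i,j),(j,i)$ to zero. For $U=R(i,j,\phi,\alpha)$ the Jacobi annihilator $\mathcal{R}_{ij}(U)$ is the $2N\times 2N$ matrix with $\mathcal{R}_{ij}(U)\mathrm{ve}(A)=\mathrm{ve}(\nu_{ij}(U^*AU))$ for all $A$. For $\nu\in[0,1]$, $\mathbf{R}_{ij}^{\nu}=\{\mathcal{R}_{ij}(U): U=R(i,j,\phi,\alpha),\ |\cos\phi|\ge\nu\}$.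 Let $\mathcal{P}_n=\{(r,s):1\le r<s\le n\}$. For an ordering $\mathcal{O}=(i_0,j_0),\dots,(i_{N-1},j_{N-1})$ of $\mathcal{P}_n$ (each pair exactly once), the class of Jacobi operators is $\mathbf{J}_{\mathcal{O}}^{\nu}=\{\mathcal{R}_{i_{N-1}j_{N-1}}\cdots\mathcal{R}_{i_1j_1}\mathcal{R}_{i_0j_0}: \mathcal{R}_{i_kj_k}\in\mathbf{R}_{i_kj_k}^{\nu},\ 0\le k\le N-1\}$. $\|\cdot\|_2$ is the spectral norm. $\mathcal{C}_c^{(n)}$ is the set of orderings of the form $(1,2),(\tau_3(1),3),(\tau_3(2),3),\dots,(\tau_n(1),n),\dots,(\tau_n(n-1),n)$, each $\tau_j$ a permutation of $\{1,\dots,j-1\}$, $3\le j\le n$. *)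

(* Defs.v *)
From HB Require Import structures.
From mathcomp Require Import all_boot all_order all_algebra all_fingroup.
From mathcomp Require Import boolp classical_sets reals trigo.
From mathcomp Require Import complex.

Set Implicit Arguments.
Unset Strict Implicit.
Unset Printing Implicit Defensive.
Import Order.TTheory GRing.Theory Num.Theory.
Local Open Scope ring_scope.

Section Jacobi.
Variable R : realType.
Local Notation C := (R[i]).

Definition expi (a : R) : C := Complex (cos a) (sin a).
Definition toC (x : R) : C := Complex x 0.

(* R(i,j,phi,alpha) ; indices are 0-based ('I_n), i < j assumed by the caller *)
Definition rot (n : nat) (i j : 'I_n) (phi alpha : R) : 'M[C]_n :=
  \matrix_(s < n, t < n)
    if (s == i) && (t == i) then toC (cos phi)
    else if (s == j) && (t == j) then toC (cos phi)
    else if (s == i) && (t == j) then - expi alpha * toC (sin phi)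
    else if (s == j) && (t == i) then conjc (expi alpha) * toC (sin phi)
    else if s == t then 1 else 0.

Definition adj_mx (n m : nat) (A : 'M[C]_(n, m)) : 'M[C]_(m, n) :=
  \matrix_(s, t) conjc (A t s).

Definition Npairs (n : nat) : nat := (n * n.-1)./2.

(* 0-based position of the upper entry (p,q), p<q, within [c_2;...;c_n] *)
Definition pidx (p q : nat) : nat := (q * q.-1)./2 + p.

(* ve(A) = [c_2^T, ..., c_n^T, r_2, ..., r_n]^T *)
Definition ve (n : nat) (A : 'M[C]_n) : 'cV[C]_(Npairs n + Npairs n) :=
  \col_k \sum_(p < n) \sum_(q < n)
     (if (p < q)%N && (k == pidx p q :> nat) then A p q
      else if (p < q)%N && (k == Npairs n + pidx p q :> nat) then A q p
      else 0).

Definition nuij (n : nat) (i j : 'I_n) (A : 'M[C]_n) : 'M[C]_n :=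
  \matrix_(s, t) if ((s == i) && (t == j)) || ((s == j) && (t == i)) then 0
                 else A s t.

Definition is_annihilator (n : nat) (i j : 'I_n) (U : 'M[C]_n)
  (M : 'M[C]_(Npairs n + Npairs n)) : Prop :=
  forall A : 'M[C]_n, M *m ve A = ve (nuij i j (adj_mx U *m A *m U)).

Definition annihilators (n : nat) (nu : R) (i j : 'I_n)
  (M : 'M[C]_(Npairs n + Npairs n)) : Prop :=
  exists phi alpha : R, nu <= `|cos phi| /\
    is_annihilator i j (rot i j phi alpha) M.

(* J_O^nu for an ordering O = (i_0,j_0), ..., (i_{N-1},j_{N-1}):
   products R_{i_{N-1}j_{N-1}} ... R_{i_0 j_0} *)
Fixpoint jacobi_ops (n : nat) (nu : R) (O : seq ('I_n * 'I_n))
  (J : 'M[C]_(Npairs n + Npairs n)) : Prop :=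
  match O with
  | [::] => J = 1%:M
  | (i, j) :: O' => exists J' M, jacobi_ops nu O' J' /\
      annihilators nu i j M /\ J = J' *m M
  end.

Definition vnorm (m : nat) (x : 'cV[C]_m) : R :=
  Num.sqrt (\sum_k (complex.Re (x k 0) ^+ 2 + complex.Im (x k 0) ^+ 2)).

Definition spec_norm (m : nat) (A : 'M[C]_m) : R :=
  sup [set vnorm (A *m x) | x in [set x : 'cV[C]_m | vnorm x <= 1]]%classic.

End Jacobi.

(* The class C_c^(n) (0-based indices): orderings
   (tau_1(0),1), (tau_2(0),2),(tau_2(1),2), ..., (tau_{n-1}(0),n-1),...,(tau_{n-1}(n-2),n-1)
   with each tau_j a permutation of {0,...,j-1}. *)
Definition widen_lt (n : nat) (j : 'I_n) (i : 'I_j) : 'I_n :=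
  widen_ord (ltnW (ltn_ord j)) i.

Definition col_cyclic (n : nat) (O : seq ('I_n * 'I_n)) : Prop :=
  exists tau : forall j : 'I_n, {perm 'I_j},
    O = flatten [seq [seq (widen_lt (tau j i), j) | i <- enum 'I_j]
                | j <- enum 'I_n].

(* Main.v *)
Require Import Defs.
From HB Require Import structures.
From mathcomp Require Import all_boot all_order all_algebra all_fingroup.
From mathcomp Require Import boolp classical_sets reals trigo.
From mathcomp Require Import complex.
From mathcomp Require Import ring lra zify.
Import Order.TTheory GRing.Theory Num.Theory.
Local Open Scope ring_scope.
Set Implicit Arguments.
Unset Strict Implicit.
Section S.
Variable R : realType.
Local Notation C := (R[i]).
Definition sq (z : C) : R := complex.Re z ^+ 2 + complex.Im z ^+ 2.

Lemma sqM (x y : C) : sq (x * y) = sq x * sq y.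
Proof. case: x => a b; case: y => c d; rewrite /sq /=. ring. Qed.
Lemma sqD_ge (x y : C) : sq x / 2 - sq y <= sq (x + y).
Proof. case: x => a b; case: y => c d; rewrite /sq /=. have h1 := sqr_ge0 (a + 2*c). have h2 := sqr_ge0 (b + 2*d). nra. Qed.
Lemma sq_ge0 x : 0 <= sq x. Proof. rewrite /sq; nra. Qed.
Lemma sqC (x : R) : sq (toC x) = x ^+ 2. Proof. rewrite /sq /= ; ring. Qed.
Lemma sqN x : sq (- x) = sq x. Proof. case: x => a b; rewrite /sq /=; ring. Qed.
Lemma sq0 : sq 0 = 0. Proof. rewrite /sq /=; ring. Qed.
Lemma sq_conj x : sq (conjc x) = sq x. Proof. case: x => a b; rewrite /sq /=; ring. Qed.
Lemma sq_expi a : sq (expi a) = 1. Proof. rewrite /sq /=; exact: cos2Dsin2. Qed.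

Lemma pair_id (c s : R) (z x y : C) : c ^+ 2 + s ^+ 2 = 1 -> sq z = 1 ->
  sq (toC c * x + z * toC s * y) + sq (- (conjc z * toC s) * x + toC c * y) = sq x + sq y.
Proof.
case: z => z1 z2; case: x => a b; case: y => p q; rewrite /sq /= => h1 h2.
set E := (_ + _ + _)%R.
have -> : E = (c^+2 + s^+2 * (z1^+2+z2^+2)) * (a^+2 + b^+2 + (p^+2+q^+2)) by rewrite /E; ring.
by rewrite h2 mulr1 h1 mul1r addrA.
Qed.
Section Step.
Variable n : nat.
Variables (i j : 'I_n) (phi alpha : R).
Hypothesis ij : i != j.
Local Notation U := (Defs.rot i j phi alpha).
Local Notation cc := (toC (cos phi)).
Local Notation ss := (toC (sin phi)).
Local Notation ee := (expi alpha).

Lemma rotE (a b : 'I_n) : U a b =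
  if b == i then (if a == i then cc else if a == j then conjc ee * ss else 0)
  else if b == j then (if a == i then - ee * ss else if a == j then cc else 0)
  else (if a == b then 1 else 0).
Proof.
have ji : j != i by rewrite eq_sym.
rewrite mxE.
have [->|bi] := eqVneq b i.
  rewrite ?eqxx ?(negbTE ji) ?(negbTE ij) ?andbF ?andbT.
  by have [aa|ai] := eqVneq a i.
have [->|bj] := eqVneq b j.
  rewrite ?eqxx ?(negbTE ji) ?(negbTE ij) ?(negbTE bi) ?andbF ?andbT.
  have [aa|ai] := eqVneq a i; have [bb|aj] := eqVneq a j => //.
  by move: ij; rewrite -aa -bb eqxx.
by rewrite !andbF.
Qed.

Lemma sum_two (f : 'I_n -> C) (u v : C) :
  \sum_b (if b == i then u else if b == j then v else 0) * f b = u * f i + v * f j.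
Proof.
rewrite (bigD1 i) //= eqxx (bigD1 j) /=; last by rewrite eq_sym.
rewrite eqxx eq_sym (negbTE ij) big1 ?addr0 // => b /andP[bi bj].
by rewrite (negbTE bi) (negbTE bj) mul0r.
Qed.

Lemma sum_one (f : 'I_n -> C) (t : 'I_n) :
  \sum_b (if b == t then 1 else 0) * f b = f t.
Proof.
rewrite (bigD1 t) //= eqxx mul1r big1 ?addr0 // => b bt.
by rewrite (negbTE bt) mul0r.
Qed.

Lemma sum_twor (f : 'I_n -> C) (u v : C) :
  \sum_b f b * (if b == i then u else if b == j then v else 0) = f i * u + f j * v.
Proof.
rewrite [f i * u]mulrC [f j * v]mulrC -sum_two.
by apply: eq_bigr => b _; rewrite mulrC.
Qed.

Lemma sum_oner (f : 'I_n -> C) (t : 'I_n) :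
  \sum_b f b * (if b == t then 1 else 0) = f t.
Proof.
rewrite -[f t]sum_one; by apply: eq_bigr => b _; rewrite mulrC.
Qed.

Lemma conjcC (x : R) : conjc (toC x) = toC x.
Proof. by rewrite /toC /conjc oppr0. Qed.

Lemma mulrotE (X : 'M[C]_n) a t : (X *m U) a t =
  if t == i then X a i * cc + X a j * (conjc ee * ss)
  else if t == j then X a i * (- ee * ss) + X a j * cc else X a t.
Proof.
rewrite mxE; under eq_bigr => b _ do rewrite rotE.
have [ti|ti] := eqVneq t i; first by rewrite sum_twor.
have [tj|tj] := eqVneq t j; first by rewrite sum_twor.
by rewrite sum_oner.
Qed.

Lemma cj1 : conjc (conjc ee * ss) = ee * ss.
Proof. by rewrite /expi /toC /conjc; simpc. Qed.
Lemma cj2 : conjc (- ee * ss) = - (conjc ee * ss).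
Proof. by rewrite /expi /toC /conjc; simpc. Qed.

Lemma rotmulE (X : 'M[C]_n) a t : (adj_mx U *m X) a t =
  if a == i then cc * X i t + ee * ss * X j t
  else if a == j then - (conjc ee * ss) * X i t + cc * X j t else X a t.
Proof.
rewrite mxE; under eq_bigr => b _ do rewrite mxE rotE.
have [ai|ai] := eqVneq a i.
  rewrite -(sum_two (fun b => X b t)); apply: eq_bigr => b _.
  case: (b == i); first by rewrite conjcC.
  case: (b == j); last by rewrite rmorph0.
  by rewrite cj1.
have [aj|aj] := eqVneq a j.
  rewrite -(sum_two (fun b => X b t)); apply: eq_bigr => b _.
  case: (b == i); first by rewrite cj2.
  case: (b == j); first by rewrite conjcC.
  by rewrite rmorph0.
rewrite -[X a t](sum_one (fun b => X b t)); apply: eq_bigr => b _.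
by case: (b == a); rewrite ?rmorph0 ?rmorph1.
Qed.

Definition step (A : 'M[C]_n) : 'M[C]_n :=
  nuij i j (adj_mx U *m A *m U).

Lemma stepE (A : 'M[C]_n) a t : step A a t =
  if ((a == i) && (t == j)) || ((a == j) && (t == i)) then 0 else
  if t == i then (adj_mx U *m A) a i * cc + (adj_mx U *m A) a j * (conjc ee * ss)
  else if t == j then (adj_mx U *m A) a i * (- ee * ss) + (adj_mx U *m A) a j * cc
  else (adj_mx U *m A) a t.
Proof. by rewrite /step mxE mulrotE. Qed.

Lemma step_out (A : 'M[C]_n) a t : a != i -> a != j -> t != i -> t != j ->
  step A a t = A a t.
Proof.
move=> ai aj ti tj; rewrite stepE (negbTE ai) (negbTE aj) (negbTE ti) (negbTE tj) /=.
by rewrite rotmulE (negbTE ai) (negbTE aj).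
Qed.

Lemma step_ij (A : 'M[C]_n) : step A i j = 0.
Proof. by rewrite stepE !eqxx. Qed.
Lemma step_ji (A : 'M[C]_n) : step A j i = 0.
Proof. by rewrite stepE !eqxx orbT. Qed.

Lemma step_rowi (A : 'M[C]_n) t : t != i -> t != j ->
  step A i t = cc * A i t + ee * ss * A j t.
Proof.
move=> ti tj; rewrite stepE (negbTE ti) (negbTE tj) !andbF /=.
by rewrite rotmulE eqxx.
Qed.

Lemma step_rowj (A : 'M[C]_n) t : t != i -> t != j ->
  step A j t = - (conjc ee * ss) * A i t + cc * A j t.
Proof.
have ji : j != i by rewrite eq_sym.
move=> ti tj; rewrite stepE (negbTE ti) (negbTE tj) !andbF /=.
by rewrite rotmulE eqxx (negbTE ji).
Qed.

Lemma step_coli (A : 'M[C]_n) a : a != i -> a != j ->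
  step A a i = A a i * cc + A a j * (conjc ee * ss).
Proof.
move=> ai aj; rewrite stepE (negbTE ai) (negbTE aj) eqxx /=.
by rewrite !rotmulE (negbTE ai) (negbTE aj).
Qed.

Lemma step_colj (A : 'M[C]_n) a : a != i -> a != j ->
  step A a j = A a i * (- ee * ss) + A a j * cc.
Proof.
have ji : j != i by rewrite eq_sym.
move=> ai aj; rewrite stepE (negbTE ai) (negbTE aj) eqxx (negbTE ji) /=.
by rewrite !rotmulE (negbTE ai) (negbTE aj).
Qed.

Lemma row_pair (x y : C) :
  sq (cc * x + ee * ss * y) + sq (- (conjc ee * ss) * x + cc * y) = sq x + sq y.
Proof. exact: pair_id (cos2Dsin2 _) (sq_expi _). Qed.

Lemma col_pair (x y : C) :
  sq (x * cc + y * (conjc ee * ss)) + sq (x * (- ee * ss) + y * cc) = sq x + sq y.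
Proof.
have h1 := cos2Dsin2 phi; have h2 := sq_expi alpha.
move: h2; rewrite /expi /toC /sq /=.
case: x => a b; case: y => p q /= h2.
set E := (_ + _ + _)%R.
have -> : E = ((cos phi)^+2 + (sin phi)^+2 * ((cos alpha)^+2 + (sin alpha)^+2)) * (a^+2 + b^+2 + (p^+2+q^+2)) by rewrite /E; ring.
by rewrite h2 mulr1 h1 mul1r addrA.
Qed.

Variable nu : R.
Hypothesis nu0 : 0 <= nu.
Hypothesis hnu : nu <= `|cos phi|.

Lemma cos_ge : nu ^+ 2 <= cos phi ^+ 2.
Proof. rewrite -[cos phi ^+ 2]real_normK ?num_real //; have := normr_ge0 (cos phi); have := hnu; have := nu0; move=> *; nra. Qed.

Lemma sin_le : sin phi ^+ 2 <= 1.
Proof. have := cos2Dsin2 phi; have := sqr_ge0 (cos phi); lra. Qed.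

Lemma chain_col (A : 'M[C]_n) a : a != i -> a != j ->
  nu ^+ 2 / 2 * sq (A a j) - sq (A a i) <= sq (step A a j).
Proof.
move=> ai aj; rewrite step_colj // [X in _ <= sq X]addrC.
apply: le_trans (sqD_ge _ _).
rewrite !sqM sqN sqC sq_expi sqC mul1r.
have := cos_ge; have := sin_le; have := sq_ge0 (A a j); have := sq_ge0 (A a i); move=> *.
nra.
Qed.

Lemma chain_row (A : 'M[C]_n) t : t != i -> t != j ->
  nu ^+ 2 / 2 * sq (A j t) - sq (A i t) <= sq (step A j t).
Proof.
move=> ti tj; rewrite step_rowj // [X in _ <= sq X]addrC.
apply: le_trans (sqD_ge _ _).
rewrite !sqM sqN sqM sqC sq_conj sq_expi sqC mul1r.
have := cos_ge; have := sin_le; have := sq_ge0 (A j t); have := sq_ge0 (A i t); move=> *.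
nra.
Qed.

Definition off (M : nat) (X : 'M[C]_n) : R :=
  \sum_(a : 'I_n | (a < M)%N) \sum_(b : 'I_n | (b < M)%N && (a != b)) sq (X a b).

Definition Gd (M : nat) (X : 'M[C]_n) : R :=
  \sum_(a : 'I_n | (a < M)%N && (a != i) && (a != j))
     (\sum_(b : 'I_n | (b < M)%N && (a != b) && (b != i) && (b != j)) sq (X a b)
      + (sq (X a i) + sq (X a j)))
  + \sum_(b : 'I_n | (b < M)%N && (b != i) && (b != j)) (sq (X i b) + sq (X j b)).

Lemma off_decomp M (X : 'M[C]_n) : (i < M)%N -> (j < M)%N ->
  off M X = Gd M X + sq (X i j) + sq (X j i).
Proof.
move=> iM jM.
have ji : j != i by rewrite eq_sym.
rewrite /off /Gd (bigD1 i) //=.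
set S1 := \sum_(a : 'I_n | (a < M)%N && (a != i)) _.
have -> : S1 = \sum_(b : 'I_n | (b < M)%N && (j != b)) sq (X j b) +
   \sum_(a : 'I_n | (a < M)%N && (a != i) && (a != j)) \sum_(b : 'I_n | (b < M)%N && (a != b)) sq (X a b).
  by rewrite /S1 (bigD1 j) //= jM ji.
rewrite (bigD1 j) /=; last by rewrite jM ij.
rewrite [X in _ + (X + _) = _](bigD1 i) /=; last by rewrite iM ji.
have E1 : \sum_(a : 'I_n | (a < M)%N && (a != i) && (a != j))
   \sum_(b : 'I_n | (b < M)%N && (a != b)) sq (X a b) =
   \sum_(a : 'I_n | (a < M)%N && (a != i) && (a != j))
     (\sum_(b : 'I_n | (b < M)%N && (a != b) && (b != i) && (b != j)) sq (X a b)
      + (sq (X a i) + sq (X a j))).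
  apply: eq_bigr => a /andP[/andP[aM ai] aj].
  rewrite (bigD1 i) /=; last by rewrite iM ai.
  rewrite (bigD1 j) /=; last by rewrite jM aj ji.
  by rewrite addrA addrC.
have E2 : \sum_(i0 : 'I_n | ((i0 < M)%N && (i != i0)) && (i0 != j)) sq (X i i0) +
   \sum_(i0 : 'I_n | ((i0 < M)%N && (j != i0)) && (i0 != i)) sq (X j i0) =
   \sum_(b : 'I_n | (b < M)%N && (b != i) && (b != j)) (sq (X i b) + sq (X j b)).
  rewrite [RHS]big_split /=; congr (_ + _); apply: eq_bigl => b.
    by rewrite [i == b]eq_sym.
  by rewrite [j == b]eq_sym -andbA [(b != j) && _]andbC andbA.
have -> : \sum_(i0 : 'I_n | (i0 < M)%N && (i0 != i) && (i0 != j))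
   \sum_(b : 'I_n | (b < M)%N && (i0 != b)) sq (X i0 b) =
   \sum_(a : 'I_n | (a < M)%N && (a != i) && (a != j))
   \sum_(b : 'I_n | (b < M)%N && (a != b)) sq (X a b) by [].
rewrite E1 -E2.
lra.
Qed.

Lemma off_step M (A : 'M[C]_n) : (i < M)%N -> (j < M)%N ->
  off M (step A) = off M A - sq (A i j) - sq (A j i).
Proof.
move=> iM jM; rewrite !off_decomp // step_ij step_ji sq0.
have -> : Gd M (step A) = Gd M A.
  rewrite /Gd; congr (_ + _); apply: eq_bigr.
    move=> a /andP[/andP[aM ai] aj]; congr (_ + _).
      apply: eq_bigr => b /andP[/andP[/andP[_ _] bi] bj].
      by rewrite step_out.
    by rewrite step_coli // step_colj // col_pair.
  move=> b /andP[/andP[_ bi] bj].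
  by rewrite step_rowi // step_rowj // row_pair.
lra.
Qed.

Lemma off_ge0 M (X : 'M[C]_n) : 0 <= off M X.
Proof. by apply: sumr_ge0 => a _; apply: sumr_ge0 => b _; apply: sq_ge0. Qed.

Lemma off_entry M (X : 'M[C]_n) (a b : 'I_n) : (a < M)%N -> (b < M)%N -> a != b ->
  sq (X a b) <= off M X.
Proof.
move=> aM bM ab; rewrite /off (bigD1 a) //=.
rewrite (bigD1 b) /=; last by rewrite bM ab.
rewrite -addrA lerDl addr_ge0 //.
  by apply: sumr_ge0 => c _; apply: sq_ge0.
by apply: sumr_ge0 => c _; apply: sumr_ge0 => d _; apply: sq_ge0.
Qed.
End Step.

Section Reach.
Variable n : nat.
Variable nu : R.

Fixpoint reach (O : seq ('I_n * 'I_n)) (A B : 'M[C]_n) : Prop :=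
  match O with
  | [::] => B = A
  | (i, j) :: O' => exists phi alpha, nu <= `|cos phi| /\
       reach O' (step i j phi alpha A) B
  end.

Lemma ops_reach O J : jacobi_ops nu O J ->
  forall A, exists B, reach O A B /\ J *m ve A = ve B.
Proof.
elim: O J => [|[i j] O IH] J /=.
  by move=> -> A; exists A; split => //; rewrite mul1mx.
move=> [J' [M [hJ' [[phi [alpha [hc hM]]] ->]]]] A.
have [B [hB hJB]] := IH J' hJ' (step i j phi alpha A).
exists B; split; first by exists phi, alpha.
by rewrite -mulmxA hM -hJB.
Qed.

Lemma reach_cat O1 O2 A B : reach (O1 ++ O2) A B ->
  exists C, reach O1 A C /\ reach O2 C B.
Proof.
elim: O1 A => [|[i j] O1 IH] A /=; first by move=> h; exists A.
move=> [phi [alpha [hc h]]].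
have [C [h1 h2]] := IH _ h.
by exists C; split => //; exists phi, alpha.
Qed.

Definition okpairs (M : nat) (O : seq ('I_n * 'I_n)) :=
  all (fun p : 'I_n * 'I_n => (p.1 != p.2) && (p.1 < M)%N && (p.2 < M)%N) O.

Lemma reach_mono M O A B : okpairs M O -> reach O A B -> off M B <= off M A.
Proof.
elim: O A => [|[i j] O IH] A /=; first by move=> _ ->.
move=> /andP[/andP[/andP[ij iM] jM] hO] [phi [alpha [_ h]]].
apply: le_trans (IH _ hO h) _.
rewrite off_step //; have := sq_ge0 (A i j); have := sq_ge0 (A j i); move=> *; lra.
Qed.

Lemma reach_rho m O A B : okpairs m O -> reach O A B ->
  off m.+1 B - off m B = off m.+1 A - off m A.
Proof.
elim: O A => [|[i j] O IH] A /=; first by move=> _ ->.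
move=> /andP[/andP[/andP[ij iM] jM] hO] [phi [alpha [_ h]]].
rewrite (IH _ hO h) !off_step //; try lra; by apply: ltnW.
Qed.

End Reach.

Section Phase2.
Variable n : nat.
Variable nu : R.
Hypothesis nu0 : 0 <= nu.
Hypothesis nu1 : nu <= 1.
Local Notation th := (nu ^+ 2 / 2).

Lemma th_ge0 : 0 <= th.
Proof. have := sqr_ge0 nu; move=> *; lra. Qed.
Lemma th_le1 : th <= 1.
Proof. have : nu ^+ 2 <= 1 by rewrite expr_le1. move=> *; lra. Qed.

Variable m : nat.
Variable jm : 'I_n.
Hypothesis hjm : val jm = m.

Lemma phase2 (S : seq 'I_n) l (A B : 'M[C]_n) (D2 : R) (a b : 'I_n -> R) :
  reach nu [seq (k, jm) | k <- S] A B -> uniq S -> all (fun k : 'I_n => (k < m)%N) S ->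
  0 <= D2 -> (forall s t, s \in S -> t \in S -> s != t -> sq (A s t) <= D2) ->
  (forall k, k \in S -> th ^+ l * a k - l%:R * D2 <= sq (A k jm) /\
                         th ^+ l * b k - l%:R * D2 <= sq (A jm k)) ->
  (forall k, 0 <= a k /\ 0 <= b k) ->
  off m.+1 B <= off m.+1 A -
    \sum_(k <- S) (th ^+ (l + size S) * (a k + b k) - 2 * (l + size S)%:R * D2).
Proof.
move=> + + + D20 + + hab.
elim: S l A => [|k S IH] l A /=.
  by move=> -> _ _ _ _; rewrite big_nil subr0.
move=> [phi [alpha [hc hr]]] /andP[kS uS] /andP[km aS] hD hl.
have kjm : k != jm by apply/eqP => e; move: km; rewrite e hjm ltnn.
set A1 := step k jm phi alpha A.
have jmS : forall s, s \in S -> s != jm.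
  move=> s sS; apply/eqP => e; move/allP: aS => /(_ s sS); by rewrite e hjm ltnn.
have skS : forall s, s \in S -> s != k.
  by move=> s sS; apply/eqP => e; move: kS; rewrite -e sS.
have := IH l.+1 A1 hr uS aS.
have hD1 : forall s t, s \in S -> t \in S -> s != t -> sq (A1 s t) <= D2.
  move=> s t sS tS st; rewrite /A1 (step_out _ _ kjm) ?skS ?jmS //.
  by apply: hD; rewrite ?inE ?sS ?tS ?orbT.
move=> /(_ hD1).
have hl1 : forall k0, k0 \in S ->
    th ^+ l.+1 * a k0 - l.+1%:R * D2 <= sq (A1 k0 jm) /\
    th ^+ l.+1 * b k0 - l.+1%:R * D2 <= sq (A1 jm k0).
  move=> t tS.
  have [h1 h2] := hl t (mem_behead (s:=k :: S) tS).
  have e1 := chain_col alpha kjm nu0 hc A (skS t tS) (jmS t tS).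
  have e2 := chain_row alpha kjm nu0 hc A (skS t tS) (jmS t tS).
  have d1 : sq (A t k) <= D2 by apply: hD; rewrite ?inE ?eqxx ?tS ?orbT ?skS.
  have d2 : sq (A k t) <= D2.
    by apply: hD; rewrite ?inE ?eqxx ?tS ?orbT // eq_sym skS.
  have t0 := th_ge0; have t1 := th_le1.
  have p0 : 0 <= l%:R * D2 :> R by rewrite mulr_ge0 ?ler0n.
  rewrite exprS -(natr1 l).
  have hth : th * (l%:R * D2) <= l%:R * D2.
    by rewrite ler_piMl.
  split.
    have : th * (th ^+ l * a t - l%:R * D2) <= th * sq (A t jm) by rewrite ler_wpM2l.
    rewrite /A1; move: e1 hth d1; set u := sq (A t jm); set v := sq (step _ _ _ _ _ _ _).
    set T := th ^+ l; set th' := th; move=> *; nra.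
  have : th * (th ^+ l * b t - l%:R * D2) <= th * sq (A jm t) by rewrite ler_wpM2l.
  rewrite /A1; move: e2 hth d2; set u := sq (A jm t); set v := sq (step _ _ _ _ _ _ _).
  set T := th ^+ l; set th' := th; move=> *; nra.
move=> /(_ hl1).
rewrite /A1 (off_step _ _ kjm) // ?hjm ?ltnSn //; last by rewrite (leq_trans km).
rewrite big_cons addSnnS.
have [h1 h2] := hl k (mem_head _ _).
have [a0 b0] := hab k.
have t0 := th_ge0; have t1 := th_le1.
have hp : th ^+ (l + (size S).+1) <= th ^+ l.
  by rewrite -[th ^+ l]mulr1 exprD ler_wpM2l ?exprn_ge0 // exprn_ile1.
have hq : (l%:R : R) <= (l + (size S).+1)%:R by rewrite ler_nat leq_addr.
set T := th ^+ (l + (size S).+1); set L := ((l + (size S).+1)%:R : R).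
set Sg := \sum_(_ <- _) _.
have : T * (a k + b k) <= th ^+ l * (a k + b k) by rewrite ler_wpM2r ?addr_ge0.
have : l%:R * D2 <= L * D2 by rewrite ler_wpM2r.
move=> *; lra.
Qed.
End Phase2.

Section Succ.
Variable n m : nat.
Variable jm : 'I_n.
Hypothesis hjm : val jm = m.

Lemma lt_succ (b : 'I_n) : (b < m.+1)%N = (b < m)%N || (b == jm).
Proof. by rewrite ltnS leq_eqVlt orbC -hjm. Qed.

Lemma sum_succT (Q : pred 'I_n) (F : 'I_n -> R) : Q jm ->
  \sum_(b : 'I_n | (b < m.+1)%N && Q b) F b = \sum_(b : 'I_n | (b < m)%N && Q b) F b + F jm.
Proof.
move=> Qj; rewrite (bigD1 jm) /=; last by rewrite hjm ltnSn Qj.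
rewrite addrC; congr (_ + _); apply: eq_bigl => b.
rewrite lt_succ; case: (eqVneq b jm) => [->|bj]; first by rewrite hjm ltnn andbF.
by rewrite orbF andbT.
Qed.

Lemma sum_succF (Q : pred 'I_n) (F : 'I_n -> R) : ~~ Q jm ->
  \sum_(b : 'I_n | (b < m.+1)%N && Q b) F b = \sum_(b : 'I_n | (b < m)%N && Q b) F b.
Proof.
move=> Qj; apply: eq_bigl => b; rewrite lt_succ.
case: (eqVneq b jm) => [->|bj]; first by rewrite (negbTE Qj) !andbF.
by rewrite orbF.
Qed.

Lemma off_succ (X : 'M[C]_n) : off m.+1 X =
  off m X + \sum_(k : 'I_n | (k < m)%N) (sq (X k jm) + sq (X jm k)).
Proof.
rewrite /off.
have -> : \sum_(a : 'I_n | (a < m.+1)%N)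
   \sum_(b : 'I_n | (b < m.+1)%N && (a != b)) sq (X a b) =
   \sum_(a : 'I_n | (a < m.+1)%N && true)
   \sum_(b : 'I_n | (b < m.+1)%N && (a != b)) sq (X a b).
  by apply: eq_bigl => a; rewrite andbT.
rewrite sum_succT //.
have -> : \sum_(a : 'I_n | (a < m)%N && true)
   \sum_(b : 'I_n | (b < m.+1)%N && (a != b)) sq (X a b) =
   \sum_(a : 'I_n | (a < m)%N)
   (\sum_(b : 'I_n | (b < m)%N && (a != b)) sq (X a b) + sq (X a jm)).
  apply: eq_big => [a|a /andP[am _]]; first by rewrite andbT.
  rewrite sum_succT //; apply/eqP => e; move: am; by rewrite e hjm ltnn.
rewrite (sum_succF (Q := fun b => jm != b)) ?eqxx //.
have -> : \sum_(b : 'I_n | (b < m)%N && (jm != b)) sq (X jm b) =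
          \sum_(b : 'I_n | (b < m)%N) sq (X jm b).
  apply: eq_bigl => b; case: (eqVneq jm b) => [<-|]; last by rewrite andbT.
  by rewrite hjm ltnn.
by rewrite big_split /= -addrA -big_split.
Qed.
End Succ.

Lemma combine (q k L X D P O : R) : 0 <= q -> q <= 1 -> 0 <= k -> k <= 1 -> 0 <= L ->
  0 <= D -> D <= q * O -> 0 <= O -> 0 <= P -> X <= D + P -> X <= D + P - (k * P - L * D) ->
  X <= (1 - (1 - q) * k / (2 * (L + 1))) * (O + P).
Proof.
move=> q0 q1 k0 k1 L0 D0 DO O0 P0 h1 h2.
have L1 : 0 < 2 * (L + 1) by lra.
set lam := (1 - q) / (2 * (L + 1)).
have lam0 : 0 <= lam by rewrite /lam divr_ge0 //; lra.
have lamL : lam * (2 * (L + 1)) = 1 - q by rewrite /lam mulfVK // gt_eqF.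
have lam1 : lam * (L + 1) = (1 - q) / 2.
  have : 2 * (lam * (L + 1)) = 1 - q by rewrite -lamL; ring.
  move=> *; lra.
have -> : (1 - q) * k / (2 * (L + 1)) = lam * k by rewrite /lam mulrAC.
have lam1' : lam <= 1 by nra.
have a1 : 0 <= (1 - lam) * (D + P - X) by rewrite mulr_ge0 //; lra.
have a2 : 0 <= lam * (D + P - (k * P - L * D) - X) by rewrite mulr_ge0 //; lra.
have hX : X <= D + P - lam * k * P + lam * L * D by nra.
have b1 : (1 + lam * L) * D <= (1 + lam * L) * (q * O).
  by rewrite ler_wpM2l // addr_ge0 // mulr_ge0.
have b2 : lam * L * q <= lam * L by rewrite ler_piMr // mulr_ge0.
have b3 : lam * k <= lam by rewrite ler_piMr.
have b4 : (1 + lam * L) * q + lam * k <= 1 by nra.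
have b5 : ((1 + lam * L) * q + lam * k) * O <= O by rewrite ler_piMl // addr_ge0 // mulr_ge0 // addr_ge0 // mulr_ge0.
nra.
Qed.

Fixpoint qf (th : R) (m : nat) : R :=
  match m with
  | 0 => 0
  | m'.+1 => 1 - (1 - qf th m') * th ^+ m' / (2 * (2 * (m' * m')%:R + 1))
  end.

Lemma qf_bound th m : 0 < th -> th <= 1 -> 0 <= qf th m /\ qf th m < 1.
Proof.
move=> t0 t1; elim: m => [|m [q0 q1]] /=; first by lra.
set d := 2 * _.
have L1 : 0 < d by rewrite mulr_gt0 // ltr_pwDr // mulr_ge0.
have L2 : 2 <= d by rewrite ler_peMr // lerDr mulr_ge0.
have k0 : 0 < th ^+ m by rewrite exprn_gt0.
have k1 : th ^+ m <= 1 by rewrite exprn_ile1 // ltW.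
have h1 : 0 < (1 - qf th m) * th ^+ m by rewrite mulr_gt0 // subr_gt0.
have h2 : (1 - qf th m) * th ^+ m <= 1 by nra.
split.
  rewrite subr_ge0 ler_pdivrMr //; lra.
by rewrite ltrBlDr ltrDl divr_gt0.
Qed.

Section Main.
Variable n : nat.
Variable nu : R.
Hypothesis nu0 : 0 < nu.
Hypothesis nu1 : nu <= 1.
Variable tau : forall j : 'I_n, {perm 'I_j}.
Local Notation th := (nu ^+ 2 / 2).

Definition colseq (j : 'I_n) : seq ('I_n * 'I_n) :=
  [seq (widen_lt (tau j i), j) | i <- enum 'I_j].

Lemma mem_take_lt m (j : 'I_n) : j \in take m (enum 'I_n) -> (j < m)%N.
Proof.
move=> h; have : val j \in map val (take m (enum 'I_n)) by apply: map_f.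
rewrite map_take val_enum_ord take_iota mem_iota add0n => /andP[_].
by move=> /leq_trans; apply; rewrite geq_minl.
Qed.

Lemma ok_prefix m : okpairs m (flatten [seq colseq j | j <- take m (enum 'I_n)]).
Proof.
apply/allP => p /flattenP[s /mapP[j jT ->] /mapP[i _ ->]] /=.
have jm := mem_take_lt jT.
have ij : (tau j i < j)%N := ltn_ord _.
rewrite (leq_trans ij (ltnW jm)) jm andbT.
rewrite andbT; apply/negP => /eqP e; have e2 := congr1 val e; move: ij; by rewrite /= in e2; rewrite e2 ltnn.
Qed.

Lemma sum_const_seq (T : Type) (S : seq T) (c : R) : \sum_(k <- S) c = (size S)%:R * c.
Proof.
elim: S => [|x S IH]; first by rewrite big_nil mul0r.
by rewrite big_cons IH /= -natr1 mulrDl mul1r addrC.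
Qed.

Lemma mainP m : (m <= n)%N -> forall A B,
  reach nu (flatten [seq colseq j | j <- take m (enum 'I_n)]) A B ->
  off m B <= qf th m * off m A.
Proof.
have th0 : 0 < th by rewrite divr_gt0 // exprn_gt0.
have th1 : th <= 1 by apply: th_le1; [exact: ltW|].
elim: m => [|m IH] mn A B.
  move=> _; rewrite /= mul0r /off big1 // => a; by rewrite ltn0.
have mn' : (m < n)%N by [].
set jm := Ordinal mn'.
have hjm : val jm = m by [].
have -> : take m.+1 (enum 'I_n) = rcons (take m (enum 'I_n)) jm.
  rewrite (take_nth jm) ?size_enum_ord //; congr rcons.
  by apply: val_inj; rewrite /= nth_enum_ord.
rewrite map_rcons flatten_rcons => /reach_cat [A' [h1 h2]].
have IH' := IH (ltnW mn) A A' h1.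
have rho := reach_rho (ok_prefix m) h1.
set S := [seq widen_lt (tau jm i) | i <- enum 'I_jm].
have hS : colseq jm = [seq (k, jm) | k <- S] by rewrite /colseq /S -map_comp.
rewrite hS in h2.
have uS : uniq S.
  rewrite map_inj_uniq ?enum_uniq // => x y /(congr1 val) /= /val_inj.
  exact: perm_inj.
have aS : all (fun k : 'I_n => (k < m)%N) S.
  by apply/allP => k /mapP[i _ ->] /=; exact: (ltn_ord (tau jm i)).
have D0 := off_ge0 m A'.
have P2 := @phase2 n nu (ltW nu0) nu1 m jm hjm S 0 A' B (off m A')
  (fun k => sq (A' k jm)) (fun k => sq (A' jm k)) h2 uS aS D0.
have hent : forall s t : 'I_n, s \in S -> t \in S -> s != t -> sq (A' s t) <= off m A'.
  move=> s t sS tS st; apply: off_entry => //.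
    by move/allP: aS => /(_ s sS).
  by move/allP: aS => /(_ t tS).
have hl0 : forall k, k \in S -> th ^+ 0 * sq (A' k jm) - 0%:R * off m A' <= sq (A' k jm) /\
    th ^+ 0 * sq (A' jm k) - 0%:R * off m A' <= sq (A' jm k).
  by move=> k _; rewrite !expr0 !mul1r !mul0r !subr0.
have := P2 hent hl0 (fun k => conj (sq_ge0 _) (sq_ge0 _)).
clear P2.

rewrite add0n sumrB sum_const_seq -mulr_sumr.
have sizeS : size S = m by rewrite /S size_map size_enum_ord.
have sumS : \sum_(k <- S) (sq (A' k jm) + sq (A' jm k)) =
            \sum_(k : 'I_n | (k < m)%N) (sq (A' k jm) + sq (A' jm k)).
  rewrite /S big_map big_enum /=.
  set F := fun k : 'I_n => sq (A' k jm) + sq (A' jm k).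
  have e := @reindex_inj R +%R 0 'I_jm (tau jm) predT (fun i => F (widen_lt i)) (@perm_inj _ (tau jm)).
  have e2 := @big_ord_narrow_cond R 0 +%R jm n predT F (ltnW (ltn_ord jm)).
  rewrite /= in e e2.
  transitivity (\sum_(i : 'I_jm) F (widen_lt (tau jm i))); first by apply: eq_bigl.
  rewrite -e /widen_lt -e2.
  by apply: eq_bigl.
have rA : \sum_(k : 'I_n | (k < m)%N) (sq (A' k jm) + sq (A' jm k)) = off m.+1 A' - off m A'.
  by rewrite (off_succ hjm) addrAC subrr add0r.
rewrite sumS rA sizeS.
have mono : off m.+1 B <= off m.+1 A'.
  apply: (reach_mono _ h2); apply/allP => p /mapP[k kS ->] /=.
  have km : (k < m)%N by move/allP: aS => /(_ k kS).
  rewrite ltnSn ltnS (ltnW km) !andbT.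
  by apply/eqP => e; move: km; rewrite e hjm ltnn.
have PA : 0 <= off m.+1 A - off m A.
  rewrite (off_succ hjm) addrAC subrr add0r; apply: sumr_ge0 => k _.
  by rewrite addr_ge0 ?sq_ge0.
have [q0 q1] := qf_bound m th0 th1.
move=> ph.
rewrite /=.
have -> : off m.+1 A = off m A + (off m.+1 A - off m A) by ring.
apply: (@combine (qf th m) (th ^+ m) (2 * (m * m)%:R) (off m.+1 B) (off m A')
   (off m.+1 A - off m A)) => //.
- exact: ltW.
- by rewrite exprn_ge0 // ltW.
- by rewrite exprn_ile1 // ltW.
- by rewrite mulr_ge0 // ler0n.
- exact: off_ge0.
- by rewrite -rho; lra.
- rewrite -rho; move: ph; rewrite natrM.
  set x := off m.+1 A'; set y := off m A'; set z := (m%:R : R); move=> *; nra.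
Qed.
End Main.

Section VE.
Variable n : nat.
Local Notation N := (Npairs n).
Local Open Scope nat_scope.

Lemma NpE : N = 'C(n, 2). Proof. by rewrite bin2. Qed.
Lemma pidxE p q : pidx p q = 'C(q, 2) + p. Proof. by rewrite bin2. Qed.
Lemma binS2 q : 'C(q.+1, 2) = 'C(q, 2) + q. Proof. by rewrite binS bin1. Qed.

Lemma pidx_lt (p q : nat) : (p < q)%N -> (q < n)%N -> (pidx p q < N)%N.
Proof.
move=> pq qn; rewrite pidxE NpE.
have := leq_bin2l 2 qn; rewrite binS2; lia.
Qed.

Lemma pidx_inj (p q p' q' : nat) : (p < q)%N -> (p' < q')%N -> pidx p q = pidx p' q' ->
  p = p' /\ q = q'.
Proof.
rewrite !pidxE => pq pq' e.
have [qq|qq|qq] := ltngtP q q'.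
- have := leq_bin2l 2 qq; rewrite binS2; lia.
- have := leq_bin2l 2 qq; rewrite binS2; lia.
- by subst; split => //; lia.
Qed.

Lemma pidx_surj k : (k < N)%N -> exists p q, [/\ (p < q)%N, (q < n)%N & pidx p q = k].
Proof.
rewrite NpE; elim: n k => [|m IH] k /=; first by rewrite bin_small.
rewrite binS2 => km.
have [kl|kl] := ltnP k 'C(m, 2).
  have [p [q [pq qm e]]] := IH k kl; exists p, q; split => //; exact: ltnW.
exists (k - 'C(m, 2)), m; split => //; first lia.
rewrite pidxE; lia.
Qed.

Lemma neq_val (a b : 'I_n) : a != b -> (nat_of_ord b != nat_of_ord a).
Proof. by move=> ab; apply: contra ab => /eqP e; apply/eqP; apply: val_inj. Qed.

Definition idx (p q : 'I_n) : nat := if (p < q)%N then pidx p q else N + pidx q p.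

Lemma idx_lt (p q : 'I_n) : p != q -> (idx p q < N + N)%N.
Proof.
rewrite /idx => pq; case: (ltnP p q) => h.
  by have := pidx_lt h (ltn_ord q); lia.
have h' : (q < p)%N by rewrite ltn_neqAle h andbT neq_val.
by rewrite ltn_add2l pidx_lt.
Qed.

Lemma idx_inj (p q p' q' : 'I_n) : p != q -> p' != q' -> idx p q = idx p' q' ->
  p = p' /\ q = q'.
Proof.
have neq (a b : 'I_n) : a != b -> ~~ (a < b)%N -> (b < a)%N.
  by move=> ab; rewrite -leqNgt ltn_neqAle => ->; rewrite andbT neq_val.
rewrite /idx => pq pq'.
case: (ltnP p q) => h; case: (ltnP p' q') => h' e.
- have [] := pidx_inj h h' e; by move=> /val_inj -> /val_inj ->.
- have := pidx_lt h (ltn_ord q); lia.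
- have := pidx_lt h' (ltn_ord q'); lia.
- have l1 := neq _ _ pq (negbT (leq_gtF h)) .
  have l2 := neq _ _ pq' (negbT (leq_gtF h')).
  have [] := pidx_inj l1 l2 (addnI e); by move=> /val_inj -> /val_inj ->.
Qed.
End VE.

Section VE2.
Variable n : nat.
Local Notation N := (Npairs n).

Lemma veE (X : 'M[C]_n) (k : 'I_(N + N)) : ve X k 0 =
  \sum_(pq : 'I_n * 'I_n)
    (if (pq.1 != pq.2) && (val k == idx pq.1 pq.2) then X pq.1 pq.2 else 0).
Proof.
pose g1 (p q : 'I_n) := if (p < q)%N && (val k == pidx p q) then X p q else 0.
pose g2 (p q : 'I_n) := if (p < q)%N && (val k == N + pidx p q)%N then X q p else 0.
rewrite mxE -(pair_bigA _ (fun p q =>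
   if (p != q) && (val k == idx p q) then X p q else 0)) /=.
have L1 : forall (F G H : 'I_n -> 'I_n -> C), (forall p q, F p q = G p q + H p q) ->
    \sum_p \sum_q F p q = \sum_p \sum_q G p q + \sum_p \sum_q H p q.
  move=> F G H e; rewrite -big_split; apply: eq_bigr => p _.
  by rewrite -big_split; apply: eq_bigr => q _.
rewrite (L1 _ g1 g2); last first.
  move=> p q; rewrite /g1 /g2; case: (ltnP p q) => pq /=; last by rewrite addr0.
  have := pidx_lt pq (ltn_ord q).
  case: (eqVneq (val k) (pidx p q)) => [->|]; last by rewrite add0r.
  move=> h; have -> : (pidx p q == N + pidx p q)%N = false by apply/eqP; lia.
  by rewrite addr0.
rewrite [RHS](L1 _ g1 (fun p q => g2 q p)); last first.
  move=> p q; rewrite /g1 /g2 /idx; case: (ltngtP p q) => pq.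
  - have -> : (p != q) by apply/eqP => e; move: pq; rewrite e ltnn.
    by rewrite addr0.
  - have -> : (p != q) by apply/eqP => e; move: pq; rewrite e ltnn.
    by rewrite add0r.
  - have -> : p = q by apply: val_inj.
    by rewrite eqxx /= addr0.
by congr (_ + _); rewrite exchange_big.
Qed.

Lemma sq_sum_single (I : finType) (c : pred I) (v : I -> C) :
  (forall x y, c x -> c y -> x = y) ->
  sq (\sum_x (if c x then v x else 0)) = \sum_x (if c x then sq (v x) else 0).
Proof.
move=> u; have [x0 cx0|] := pickP c.
  rewrite (bigD1 x0) //= [in RHS](bigD1 x0) //= cx0 big1 ?addr0.
    rewrite big1 ?addr0 // => y yx; case: ifP => // cy.
    by move: yx; rewrite (u _ _ cy cx0) eqxx.
  move=> y yx; case: ifP => // cy.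
  by move: yx; rewrite (u _ _ cy cx0) eqxx.
move=> h; rewrite !big1 ?sq0 // => x _; by rewrite h.
Qed.

Lemma off_pair (X : 'M[C]_n) : off n X =
  \sum_(pq : 'I_n * 'I_n) (if pq.1 != pq.2 then sq (X pq.1 pq.2) else 0).
Proof.
rewrite -(pair_bigA _ (fun p q => if p != q then sq (X p q) else 0)) /= /off.
apply: eq_big => [a|p _]; first by rewrite ltn_ord.
rewrite big_mkcond; apply: eq_bigr => q _.
by rewrite ltn_ord.
Qed.

Lemma vnorm_ve (X : 'M[C]_n) : vnorm (ve X) = Num.sqrt (off n X).
Proof.
rewrite /vnorm; congr Num.sqrt.
transitivity (\sum_k sq (ve X k 0)) => //.
have E : forall k : 'I_(N + N), sq (ve X k 0) = \sum_(pq : 'I_n * 'I_n)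
    (if (pq.1 != pq.2) && (val k == idx pq.1 pq.2) then sq (X pq.1 pq.2) else 0).
  move=> k; rewrite veE sq_sum_single //.
  move=> x y /andP[x1 /eqP x2] /andP[y1 /eqP y2].
  have [e1 e2] := idx_inj x1 y1 (etrans (esym x2) y2).
  by case: x e1 e2 {x1 x2} => ? ?; case: y {y1 y2} => ? ? /= -> ->.
under eq_bigr => k _ do rewrite E.
rewrite exchange_big off_pair /=; apply: eq_bigr => pq _.
case: (eqVneq pq.1 pq.2) => [e|ne].
  by apply: big1 => k _.
rewrite (bigD1 (Ordinal (idx_lt ne))) //= eqxx /= big1 ?addr0 // => k kne.
case: ifP => // /eqP e; case/eqP: kne; exact: val_inj.
Qed.

Lemma ve_surj (x : 'cV[C]_(N + N)) : exists X, ve X = x.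
Proof.
exists (\matrix_(p, q) \sum_(k : 'I_(N + N))
          (if (p != q) && (val k == idx p q) then x k 0 else 0)).
apply/matrixP => k z; rewrite (ord1 z) veE.
have [pq0 [c0 e0]] : exists pq0 : 'I_n * 'I_n, pq0.1 != pq0.2 /\ val k = idx pq0.1 pq0.2.
  have kN := ltn_ord k.
  case: (ltnP k N) => kl.
    have [p [q [pq qn e]]] := pidx_surj kl.
    have pn : (p < n)%N by apply: ltn_trans qn.
    exists (Ordinal pn, Ordinal qn) => /=; split.
      by apply/eqP => /(congr1 val) /= ep; move: pq; rewrite ep ltnn.
    by rewrite /idx /= pq e.
  have kl' : (k - N < N)%N by lia.
  have [p [q [pq qn e]]] := pidx_surj kl'.
  have pn : (p < n)%N by apply: ltn_trans qn.
  exists (Ordinal qn, Ordinal pn) => /=; split.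
    by apply/eqP => /(congr1 val) /= ep; move: pq; rewrite ep ltnn.
  rewrite /idx /= ltnNge (ltnW pq) /= e; lia.
rewrite (bigD1 pq0) //= c0 e0 eqxx /= big1 ?addr0; last first.
  move=> pq ne; case: ifP => // /andP[c1 /eqP e1].
  have [e2 e3] := idx_inj c1 c0 (esym e1).
  by move: ne; case: pq {c1 e1} e2 e3 => ? ? /= -> ->; rewrite -surjective_pairing eqxx.
rewrite mxE (bigD1 k) //= c0 e0 eqxx /= big1 ?addr0 // => k' kk'.
case: ifP => // /eqP e'.
have ek : k' = k by apply: val_inj; rewrite /= e' e0.
by rewrite ek eqxx in kk'.
Qed.
End VE2.
End S.

Unset Implicit Arguments.
Set Strict Implicit.
Theorem theorem3p2 (R : realType) (n : nat) (nu : R) :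
  (2 <= n)%N -> 0 < nu -> nu <= 1 ->
  exists mu : R, 0 <= mu /\ mu < 1 /\
    forall (O : seq ('I_n * 'I_n)) (J : 'M[R[i]]_(Npairs n + Npairs n)),
      col_cyclic O -> jacobi_ops nu O J -> spec_norm J <= mu.
Proof.
move=> _ nu0 nu1.
have th0 : 0 < nu ^+ 2 / 2 by rewrite divr_gt0 // exprn_gt0.
have th1 : nu ^+ 2 / 2 <= 1 by apply: th_le1; [exact: ltW|].
have [q0 q1] := qf_bound n th0 th1.
exists (Num.sqrt (qf (nu ^+ 2 / 2) n)); split; first exact: sqrtr_ge0.
split; first by rewrite -[X in _ < X]sqrtr1 ltr_sqrt.
move=> O J [tau ->] hJ.
rewrite /spec_norm; apply: ge_sup.
  exists (vnorm (J *m ve (0 : 'M[R[i]]_n))), (ve 0) => //.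
  rewrite /= vnorm_ve.
  have -> : off n (0 : 'M[R[i]]_n) = 0.
    by rewrite /off big1 // => a _; rewrite big1 // => b _; rewrite mxE sq0.
  by rewrite sqrtr0 ler01.
move=> y [x hx <-].
have [X eX] := ve_surj x.
have [B [hB hJB]] := ops_reach hJ X.
rewrite -eX hJB !vnorm_ve.
have := @mainP R n nu nu0 nu1 tau n (leqnn n) X B.
rewrite take_oversize ?size_enum_ord // => /(_ hB) H.
move: hx; rewrite /= -eX vnorm_ve => hx.
apply: (le_trans (ler_wsqrtr H)).
rewrite sqrtrM // -[X in _ <= X]mulr1 ler_wpM2l ?sqrtr_ge0 //.
Qed.
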